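(* Let $(K_n)_{n\in\omega}$ be an enumeration of the finitely presented groups (one representative of each isomorphism class), and let $G=\prod_{n\in\omega}K_n$ be their restricted direct product (the subgroup of the full direct product consisting of the elements with only finitely many nontrivial coordinates). Let $L$ be a two-generated simple group such that every homomorphism $L\to G$ is trivial, and let $H=L\times G$. Then $R_G L = L$ and $R_H L = 1$. In particular, $G$ and $H$ are not geometrically equivalent, while $G$ and $H$ satisfy the same quasiidentities.
   Context: For groups $G$ and $X$, the $G$-radical of $X$ is $R_G X=\bigcap\{\ker\varphi : \varphi: X\to G \text{ a homomorphism}\}$. For a normal subgroup $U$ of $X$, the $G$-closure $\overline{U}^G$ of $U$ in $X$ is the normal subgroup of $X$ containing $U$ with $\overline{U}^G/U = R_G(X/U)$; equivalently $\overline{U}^G=\bigcap\{\ker\varphi:\varphi:X\to G,\ U\subseteq\ker\varphi\}$. Two groups $G$ and $H$ are geometrically equivalent if for every free group $F$ of finite rank and every normal subgroup $U$ of $F$, the $G$-closure and the $H$-closure of $U$ in $F$ coincide. A quasiidentity is a formula $(w_1=1\wedge\dots\wedge w_n=1)\rightarrow w=1$ where $w_1,\dots,w_n,w$ are words in a free group of finite rank; a group satisfies it if it holds under every assignment of group elements to the variables. Two groups satisfy the same quasiidentities if every quasiidentity satisfied by one is satisfied by the other. *)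

(* Defs.v *)
From Stdlib Require Import List ProofIrrelevance FunctionalExtensionality.
From mathcomp Require Import all_boot.
Set Implicit Arguments. Unset Strict Implicit. Unset Printing Implicit Defensive.

Record group := Group {
  gcarrier :> Type;
  gmul : gcarrier -> gcarrier -> gcarrier;
  ginv : gcarrier -> gcarrier;
  gone : gcarrier;
  gmulA : forall x y z, gmul x (gmul y z) = gmul (gmul x y) z;
  gmul1 : forall x, gmul gone x = x;
  gmulV : forall x, gmul (ginv x) x = gone }.
Arguments gmul {g}. Arguments ginv {g}. Arguments gone {g}.

Definition hom (X Y : group) (f : X -> Y) : Prop :=
  forall x y, f (gmul x y) = gmul (f x) (f y).

Definition iso (X Y : group) : Prop :=
  exists f : X -> Y, hom f /\ bijective f.

Definition normal (X : group) (N : X -> Prop) : Prop :=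
  N gone /\ (forall x y, N x -> N y -> N (gmul x y)) /\ (forall x, N x -> N (ginv x))
  /\ (forall x g, N x -> N (gmul (gmul (ginv g) x) g)).

Definition simple (X : group) : Prop :=
  (exists x : X, x <> gone) /\
  forall N : X -> Prop, normal N -> (forall x, N x -> x = gone) \/ (forall x, N x).

Definition radical (G X : group) (x : X) : Prop :=
  forall f : X -> G, hom f -> f x = gone.

Inductive term (V : Type) : Type :=
| Var : V -> term V
| One : term V
| Mul : term V -> term V -> term V
| Inv : term V -> term V.
Arguments One {V}.

Fixpoint eval (X : group) V (a : V -> X) (t : term V) : X :=
  match t with
  | Var v => a v
  | One => gone
  | Mul t1 t2 => gmul (eval a t1) (eval a t2)
  | Inv t1 => ginv (eval a t1)
  end.

(** Equality in the free group: the congruence generated by the group axioms. *)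
Inductive feq V : term V -> term V -> Prop :=
| feq_refl t : feq t t
| feq_sym t u : feq t u -> feq u t
| feq_trans t u v : feq t u -> feq u v -> feq t v
| feq_mul t t' u u' : feq t t' -> feq u u' -> feq (Mul t u) (Mul t' u')
| feq_inv t t' : feq t t' -> feq (Inv t) (Inv t')
| feq_assoc t u v : feq (Mul t (Mul u v)) (Mul (Mul t u) v)
| feq_one t : feq (Mul One t) t
| feq_invl t : feq (Mul (Inv t) t) One.

Definition free_normal n (U : term 'I_n -> Prop) : Prop :=
  (forall t u, feq t u -> U t -> U u) /\ U One /\
  (forall t u, U t -> U u -> U (Mul t u)) /\ (forall t, U t -> U (Inv t)) /\
  (forall t g, U t -> U (Mul (Mul (Inv g) t) g)).

(** G-closure of U in F_n: intersection of the kernels of homs F_n -> G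
    containing U; a hom F_n -> G is given by an assignment 'I_n -> G. *)
Definition gclosure (G : group) n (U : term 'I_n -> Prop) (w : term 'I_n) : Prop :=
  forall a : 'I_n -> G, (forall u, U u -> eval a u = gone) -> eval a w = gone.

Definition geom_equiv (G H : group) : Prop :=
  forall n (U : term 'I_n -> Prop), free_normal U ->
    forall w, gclosure G U w <-> gclosure H U w.

Definition qi_sat (G : group) n (ws : list (term 'I_n)) (w : term 'I_n) : Prop :=
  forall a : 'I_n -> G, (forall u, List.In u ws -> eval a u = gone) -> eval a w = gone.

Definition same_qi (G H : group) : Prop :=
  forall n (ws : list (term 'I_n)) (w : term 'I_n), qi_sat G ws w <-> qi_sat H ws w.

Inductive nclosure n (rels : list (term 'I_n)) : term 'I_n -> Prop :=
| nc_rel r : List.In r rels -> nclosure rels r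
| nc_one : nclosure rels One
| nc_mul t u : nclosure rels t -> nclosure rels u -> nclosure rels (Mul t u)
| nc_inv t : nclosure rels t -> nclosure rels (Inv t)
| nc_conj t g : nclosure rels t -> nclosure rels (Mul (Mul (Inv g) t) g)
| nc_feq t u : feq t u -> nclosure rels t -> nclosure rels u.

Definition fin_presented (X : group) : Prop :=
  exists n (g : 'I_n -> X) (rels : list (term 'I_n)),
    (forall x, exists w, eval g w = x) /\
    (forall w, eval g w = gone <-> nclosure rels w).

Definition two_generated (X : group) : Prop :=
  exists a b : X, forall x : X, exists w : term 'I_2,
    eval (fun i : 'I_2 => if nat_of_ord i == 0 then a else b) w = x.

Lemma sig_ext (A : Type) (P : A -> Prop) (x y : {a | P a}) :
  proj1_sig x = proj1_sig y -> x = y.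
Proof.
destruct x as [x px], y as [y py]; simpl; intros ->.
f_equal; apply proof_irrelevance.
Qed.

Lemma gmulK (X : group) (x y : X) : gmul (ginv x) (gmul x y) = y.
Proof. by rewrite gmulA gmulV gmul1. Qed.

Lemma ginv_one (X : group) : ginv (gone : X) = gone.
Proof.
have mulgV (x : X) : gmul x (ginv x) = gone.
  rewrite -[gmul x (ginv x)]gmul1 -(gmulV (ginv x)) -gmulA.
  by rewrite [gmul (ginv x) (gmul x (ginv x))]gmulK.
by rewrite -[ginv gone]gmul1 mulgV.
Qed.

Section RProd.
Variable K : nat -> group.

Definition rprod_carrier :=
  {f : forall n, K n | exists N, forall m, (N <= m)%N -> f m = gone}.

Lemma rprod_mul_fin (f g : rprod_carrier) :
  exists N, forall m, (N <= m)%N ->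
    (fun n => gmul (proj1_sig f n) (proj1_sig g n)) m = gone.
Proof.
destruct f as [f [N1 H1]], g as [g [N2 H2]]; exists (maxn N1 N2) => m Hm /=.
rewrite H1 ?H2 ?gmul1 //; apply: leq_trans Hm; by rewrite ?leq_maxl ?leq_maxr.
Qed.

Lemma rprod_inv_fin (f : rprod_carrier) :
  exists N, forall m, (N <= m)%N -> (fun n => ginv (proj1_sig f n)) m = gone.
Proof.
destruct f as [f [N1 H1]]; exists N1 => m Hm /=.
by rewrite H1 // ginv_one.
Qed.

Lemma rprod_one_fin :
  exists N, forall m, (N <= m)%N -> (fun n => (gone : K n)) m = gone.
Proof. by exists 0%N. Qed.

Definition rprod_mul (f g : rprod_carrier) : rprod_carrier :=
  exist _ _ (rprod_mul_fin f g).
Definition rprod_inv (f : rprod_carrier) : rprod_carrier :=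
  exist _ _ (rprod_inv_fin f).
Definition rprod_one : rprod_carrier := exist _ _ rprod_one_fin.

Lemma rprod_mulA x y z : rprod_mul x (rprod_mul y z) = rprod_mul (rprod_mul x y) z.
Proof. apply: sig_ext; apply: functional_extensionality_dep => n /=; exact: gmulA. Qed.
Lemma rprod_mul1 x : rprod_mul rprod_one x = x.
Proof. apply: sig_ext; apply: functional_extensionality_dep => n /=; exact: gmul1. Qed.
Lemma rprod_mulV x : rprod_mul (rprod_inv x) x = rprod_one.
Proof. apply: sig_ext; apply: functional_extensionality_dep => n /=; exact: gmulV. Qed.

Definition rprod : group := Group rprod_mulA rprod_mul1 rprod_mulV.
End RProd.

Section DProd.
Variables X Y : group.
Definition dprod_mul (p q : X * Y) : X * Y := (gmul p.1 q.1, gmul p.2 q.2).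
Definition dprod_inv (p : X * Y) : X * Y := (ginv p.1, ginv p.2).
Definition dprod_one : X * Y := (gone, gone).
Lemma dprod_mulA p q r : dprod_mul p (dprod_mul q r) = dprod_mul (dprod_mul p q) r.
Proof. by rewrite /dprod_mul /= !gmulA. Qed.
Lemma dprod_mul1 p : dprod_mul dprod_one p = p.
Proof. by case: p => a b; rewrite /dprod_mul /= !gmul1. Qed.
Lemma dprod_mulV p : dprod_mul (dprod_inv p) p = dprod_one.
Proof. by rewrite /dprod_mul /= !gmulV. Qed.
Definition dprod : group := Group dprod_mulA dprod_mul1 dprod_mulV.
End DProd.

(* Main.v *)
Require Import Defs.
From Stdlib Require Import List ProofIrrelevance FunctionalExtensionality PropExtensionality ClassicalEpsilon PeanoNat.
From mathcomp Require Import all_boot.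
Set Implicit Arguments. Unset Strict Implicit. Unset Printing Implicit Defensive.

Lemma mulgV' (X : group) (x : X) : gmul x (ginv x) = gone.
Proof.
rewrite -[gmul x (ginv x)]gmul1 -(gmulV (ginv x)) -gmulA.
by rewrite [gmul (ginv x) (gmul x (ginv x))]gmulK.
Qed.

Lemma mulg1' (X : group) (x : X) : gmul x gone = x.
Proof. by rewrite -(gmulV x) gmulA mulgV' gmul1. Qed.

Lemma mulgKV (X : group) (x y : X) : gmul (gmul y x) (ginv x) = y.
Proof. by rewrite -gmulA mulgV' mulg1'. Qed.

Lemma invg_uniq (X : group) (x y : X) : gmul x y = gone -> ginv x = y.
Proof. by move=> h; rewrite -[ginv x]mulg1' -h gmulK. Qed.

Lemma invgK' (X : group) (x : X) : ginv (ginv x) = x.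
Proof. by apply: invg_uniq; rewrite gmulV. Qed.

Lemma invgM' (X : group) (x y : X) : ginv (gmul x y) = gmul (ginv y) (ginv x).
Proof.
apply: invg_uniq.
by rewrite -gmulA [gmul y _]gmulA mulgV' gmul1 mulgV'.
Qed.

Lemma mul_inv_eq (X : group) (x y : X) : gmul x (ginv y) = gone -> x = y.
Proof.
move=> h; have e : gmul (gmul x (ginv y)) y = x by rewrite -gmulA gmulV mulg1'.
by rewrite -e h gmul1.
Qed.

Lemma hom1 (X Y : group) (f : X -> Y) : hom f -> f gone = gone.
Proof.
move=> hf; have := hf gone gone; rewrite gmul1 => h.
by rewrite -(mulgKV (f gone) (f gone)) -h mulgV'.
Qed.

Lemma homV (X Y : group) (f : X -> Y) : hom f -> forall x, f (ginv x) = ginv (f x).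
Proof.
move=> hf x; symmetry; apply: invg_uniq.
by rewrite -hf mulgV' hom1.
Qed.

Lemma eval_hom (X Y : group) (f : X -> Y) V (a : V -> X) t :
  hom f -> f (eval a t) = eval (fun v => f (a v)) t.
Proof.
move=> hf; elim: t => //= [|t1 IH1 t2 IH2|t IH].
- exact: hom1.
- by rewrite hf IH1 IH2.
- by rewrite homV // IH.
Qed.

Lemma eval_feq (X : group) V (a : V -> X) t u : feq t u -> eval a t = eval a u.
Proof.
induction 1; simpl; try congruence.
- by rewrite gmulA.
- by rewrite gmul1.
- by rewrite gmulV.
Qed.

Record congr V (E : term V -> term V -> Prop) : Prop := Congr {
  Erefl : forall t, E t t;
  Esym : forall t u, E t u -> E u t;
  Etrans : forall t u v, E t u -> E u v -> E t v;
  Emul : forall t t' u u', E t t' -> E u u' -> E (Mul t u) (Mul t' u');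
  Einv : forall t t', E t t' -> E (Inv t) (Inv t');
  Eassoc : forall t u v, E (Mul t (Mul u v)) (Mul (Mul t u) v);
  Eone : forall t, E (Mul One t) t;
  Einvl : forall t, E (Mul (Inv t) t) One }.

Definition qcar V (E : term V -> term V -> Prop) := {P : term V -> Prop | exists t, P = E t}.
Definition qcl V (E : term V -> term V -> Prop) (t : term V) : qcar E :=
  exist _ (E t) (ex_intro _ t erefl).
Definition qrep V (E : term V -> term V -> Prop) (q : qcar E) : term V :=
  proj1_sig (constructive_indefinite_description _ (proj2_sig q)).

Lemma qcl_eq V E (HE : @congr V E) t u : qcl E t = qcl E u <-> E t u.
Proof.
split.
- move=> h; have : E t = E u by have := f_equal (@proj1_sig _ _) h.
  by move=> ->; apply: (Erefl HE).
- move=> h; apply: sig_ext => /=; apply: functional_extensionality => x.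
  apply: propositional_extensionality; split => hx.
  + exact: (Etrans HE (Esym HE h) hx).
  + exact: (Etrans HE h hx).
Qed.

Lemma qrepK V E (q : qcar E) : qcl E (@qrep V E q) = q.
Proof.
apply: sig_ext => /=; rewrite /qrep.
case: (constructive_indefinite_description _ _) => t /= ->; done.
Qed.

Lemma qcl_ind V E (P : qcar E -> Prop) : (forall t, P (@qcl V E t)) -> forall q, P q.
Proof. by move=> h q; rewrite -(qrepK q). Qed.

Definition qmul V E (p q : qcar E) := @qcl V E (Mul (qrep p) (qrep q)).
Definition qinv V E (p : qcar E) := @qcl V E (Inv (qrep p)).
Definition qone V E := @qcl V E One.

Lemma qrep_cl V E (HE : @congr V E) t : E (qrep (qcl E t)) t.
Proof. by apply/(qcl_eq HE); rewrite qrepK. Qed.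

Lemma qmulE V E (HE : @congr V E) t u : qmul (qcl E t) (qcl E u) = qcl E (Mul t u).
Proof. apply/(qcl_eq HE); apply: (Emul HE); exact: qrep_cl. Qed.
Lemma qinvE V E (HE : @congr V E) t : qinv (qcl E t) = qcl E (Inv t).
Proof. apply/(qcl_eq HE); apply: (Einv HE); exact: qrep_cl. Qed.

Lemma qmulA V E (HE : @congr V E) (x y z : qcar E) :
  qmul x (qmul y z) = qmul (qmul x y) z.
Proof.
elim/qcl_ind: x => x; elim/qcl_ind: y => y; elim/qcl_ind: z => z.
rewrite !(qmulE HE); apply/(qcl_eq HE); exact: (Eassoc HE).
Qed.
Lemma qmul1 V E (HE : @congr V E) (x : qcar E) : qmul (qone E) x = x.
Proof.
elim/qcl_ind: x => x; rewrite /qone (qmulE HE); apply/(qcl_eq HE); exact: (Eone HE).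
Qed.
Lemma qmulV V E (HE : @congr V E) (x : qcar E) : qmul (qinv x) x = qone E.
Proof.
elim/qcl_ind: x => x; rewrite (qinvE HE) (qmulE HE); apply/(qcl_eq HE); exact: (Einvl HE).
Qed.

Definition qgroup V E (HE : @congr V E) : group :=
  @Defs.Group (qcar E) (@qmul V E) (@qinv V E) (qone E) (qmulA HE) (qmul1 HE) (qmulV HE).

Lemma eval_qcl V E (HE : @congr V E) t :
  @eval (qgroup HE) V (fun v => qcl E (Var v)) t = qcl E t.
Proof.
elim: t => //= [t1 IH1 t2 IH2|t IH].
- by rewrite IH1 IH2 /= (qmulE HE).
- by rewrite IH /= (qinvE HE).
Qed.

Lemma feq_congr V : congr (@feq V).
Proof. split; by [constructor | econstructor; eauto]. Qed.

Lemma feq_sem V (t u : term V) :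
  (forall (X : group) (a : V -> X), eval a t = eval a u) -> feq t u.
Proof.
move=> h; apply/(qcl_eq (feq_congr V)).
by rewrite -!(eval_qcl (feq_congr V)); exact: (h (qgroup (feq_congr V))).
Qed.

Lemma mulgVK (X : group) (x y : X) : gmul (gmul y (ginv x)) x = y.
Proof. by rewrite -gmulA gmulV mulg1'. Qed.

Ltac gs := rewrite ?ginv_one ?invgM' ?invgK' ?gmulA ?mulgKV ?mulgVK ?mulgV' ?gmulV ?gmul1 ?mulg1' ?ginv_one.
Ltac gsimp := gs; try gs.

Definition PR n (ws : list (term 'I_n)) (t u : term 'I_n) := nclosure ws (Mul t (Inv u)).

Lemma feqPR n ws (t u : term 'I_n) : feq t u -> PR ws t u.
Proof.
move=> h; apply: (nc_feq (t := One)); last exact: nc_one.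
apply: feq_sem => X a /=; rewrite (eval_feq a h); by gsimp.
Qed.

Lemma PR_congr n ws : congr (@PR n ws).
Proof.
split.
- by move=> t; apply: feqPR; apply: feq_refl.
- move=> t u h; apply: (nc_feq _ (nc_inv h)).
  by apply: feq_sem => X a /=; gsimp.
- move=> t u v h1 h2; apply: (nc_feq _ (nc_mul h1 h2)).
  by apply: feq_sem => X a /=; gsimp.
- move=> t t' u u' h1 h2.
  apply: (nc_feq _ (nc_mul (nc_conj (Inv t) h2) h1)).
  by apply: feq_sem => X a /=; gsimp.
- move=> t u h; apply: (nc_feq _ (nc_conj t (nc_inv h))).
  by apply: feq_sem => X a /=; gsimp.
- by move=> *; apply: feqPR; apply: feq_assoc.
- by move=> *; apply: feqPR; apply: feq_one.
- by move=> *; apply: feqPR; apply: feq_invl.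
Qed.

Definition Pgrp n ws := qgroup (@PR_congr n ws).

Lemma Pgrp_fp n ws : fin_presented (@Pgrp n ws).
Proof.
exists n, (fun i => qcl (PR ws) (Var i)), ws; split.
- move=> x; rewrite -(qrepK x); exists (qrep x); exact: eval_qcl.
- move=> w; rewrite (eval_qcl (PR_congr ws)).
  idtac.
  rewrite (qcl_eq (PR_congr ws)) /PR; split => h.
  + by apply: (nc_feq _ h); apply: feq_sem => X a /=; gsimp.
  + by apply: (nc_feq _ h); apply: feq_sem => X a /=; gsimp.
Qed.

Lemma qi_sound n ws (w : term 'I_n) (X : group) : nclosure ws w -> qi_sat X ws w.
Proof.
move=> h a ha; elim: h => //= {w}.
- by move=> t u _ -> _ ->; gsimp.
- by move=> t _ ->; gsimp.
- by move=> t g _ ->; gsimp.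
- by move=> t u e _ <-; symmetry; apply: eval_feq.
Qed.

Lemma qi_sub (X Y : group) (f : X -> Y) n ws (w : term 'I_n) :
  hom f -> injective f -> qi_sat Y ws w -> qi_sat X ws w.
Proof.
move=> hf fi hY a ha; apply: fi; rewrite (hom1 hf) (eval_hom _ _ hf).
apply: hY => u hu; by rewrite -(eval_hom _ _ hf) ha // hom1.
Qed.

Lemma qi_complete n ws (w : term 'I_n) : qi_sat (Pgrp ws) ws w -> nclosure ws w.
Proof.
move=> h; have := h (fun i => qcl (PR ws) (Var i)).
rewrite (eval_qcl (PR_congr ws)).
move=> h'; have e : qcl (PR ws) w = qcl (PR ws) One.
  apply: h' => u hu; rewrite (eval_qcl (PR_congr ws)).
  apply/(qcl_eq (PR_congr ws)); apply: nc_feq (nc_rel hu).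
  by apply: feq_sem => X a /=; gsimp.
move/(qcl_eq (PR_congr ws)): e => /= e; apply: (nc_feq _ e).
by apply: feq_sem => X a /=; gsimp.
Qed.

Definition embf (K : nat -> group) m (x : K m) : forall n, K n :=
  fun n => match Nat.eq_dec m n with left e => eq_rect m K x n e | right _ => gone end.

Lemma embf_fin (K : nat -> group) m (x : K m) :
  exists N, forall k, (N <= k)%N -> embf x k = gone.
Proof.
exists m.+1 => k hk; rewrite /embf; case: (Nat.eq_dec m k) => // e.
by subst k; rewrite ltnn in hk.
Qed.

Definition emb (K : nat -> group) m (x : K m) : rprod K := exist _ _ (embf_fin x).

Lemma emb_hom (K : nat -> group) m : hom (@emb K m).
Proof.
move=> x y; apply: sig_ext; apply: functional_extensionality_dep => n /=.
rewrite /embf; case: (Nat.eq_dec m n) => [e|_]; last by rewrite gmul1.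
by subst n.
Qed.

Lemma emb_inj (K : nat -> group) m : injective (@emb K m).
Proof.
move=> x y h; have := f_equal (fun f => proj1_sig f m) h => /=.
rewrite /embf; case: (Nat.eq_dec m m) => // e.
by rewrite (eq_axiomK e).
Qed.

Definition inr_d (X Y : group) (y : Y) : dprod X Y := (gone, y).
Lemma inr_hom (X Y : group) : hom (@inr_d X Y).
Proof. by move=> x y; rewrite /inr_d /= /dprod_mul /= gmul1. Qed.
Lemma inr_inj (X Y : group) : injective (@inr_d X Y).
Proof. by move=> x y [] . Qed.

Definition inl_d (X Y : group) (x : X) : dprod X Y := (x, gone).
Lemma inl_hom (X Y : group) : hom (@inl_d X Y).
Proof. by move=> x y; rewrite /inl_d /= /dprod_mul /= gmul1. Qed.

Lemma eval_pair (X Y : group) V (a : V -> X) (c : V -> Y) t :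
  @eval (dprod X Y) V (fun i => (a i, c i)) t = (eval a t, eval c t).
Proof. by elim: t => //= [t1 -> t2 ->|t ->]. Qed.

Lemma eval_const1 (X : group) V (t : term V) : eval (fun _ => (gone : X)) t = gone.
Proof. elim: t => //= [t1 IH1 t2 IH2|t IH]; [by rewrite IH1 IH2 gmul1 | by rewrite IH ginv_one]. Qed.

Theorem theorem2 (K : nat -> group)
  (HKfp : forall n, fin_presented (K n))
  (HKall : forall X : group, fin_presented X -> exists n, iso X (K n))
  (HKuniq : forall m n, iso (K m) (K n) -> m = n)
  (L : group) (HL2 : two_generated L) (HLs : simple L)
  (HLtriv : forall f : L -> rprod K, hom f -> forall x, f x = gone) :
  let G := rprod K in
  let H := dprod L G in
  (forall x : L, radical G x) /\
  (forall x : L, radical H x -> x = gone) /\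
  ~ geom_equiv G H /\
  same_qi G H.
Proof.
intros G H; subst G H.
have qiGH : same_qi (rprod K) (dprod L (rprod K)).
  move=> n ws w; split => h.
  - apply: qi_sound; apply: qi_complete.
    have [m [f [hf fb]]] := HKall _ (Pgrp_fp ws).
    apply: (qi_sub (f := fun x => emb (f x))) h.
    + by move=> x y /=; rewrite hf emb_hom.
    + by move=> x y /emb_inj; apply: bij_inj.
  - apply: (qi_sub (f := @inr_d L (rprod K))) h; [exact: inr_hom | by move=> p q []].
split; first by move=> x f hf; exact (HLtriv f hf x).
split.
  move=> x hx; have := hx _ (@inl_hom L (rprod K)).
  by rewrite /inl_d => -[].
split => //.
move=> hge.
have [a [b hab]] := HL2.
set ab := (fun i : 'I_2 => if nat_of_ord i == 0 then a else b) in hab.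
pose U := fun w => eval ab w = gone.
have hU : free_normal U.
  split; first by move=> t u e; rewrite /U (eval_feq ab e).
  split; first by [].
  split; first by rewrite /U => t u /= -> ->; gsimp.
  split; first by rewrite /U => t /= ->; gsimp.
  by rewrite /U => t g /= ->; gsimp.
have [[x hx] _] := HLs.
have [w0 hw0] := hab x.
have gc : gclosure (rprod K) U w0.
  move=> c hc.
  have key : forall t1 t2, eval ab t1 = eval ab t2 -> eval c t1 = eval c t2.
    move=> t1 t2 e; apply: mul_inv_eq; apply: (hc (Mul t1 (Inv t2))).
    by rewrite /U /= e mulgV'.
  pose rep y := proj1_sig (constructive_indefinite_description _ (hab y)).
  have repP : forall y, eval ab (rep y) = y.
    by move=> y; rewrite /rep; case: (constructive_indefinite_description _ _).
  pose f y := eval c (rep y).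
  have hf : hom f.
    move=> y z; rewrite /f; have <- : eval c (Mul (rep y) (rep z)) = gmul (eval c (rep y)) (eval c (rep z)) by [].
    by apply: key; rewrite /= !repP.
  have := HLtriv f hf x; rewrite /f -hw0 => <-.
  by apply: key; rewrite repP.
have e := proj1 (hge 2 U hU w0) gc (fun i => (ab i, (gone : rprod K)) : dprod L (rprod K)).
have {}e : ((eval ab w0, eval (fun _ : 'I_2 => (gone : rprod K)) w0) : dprod L (rprod K)) = gone.
  rewrite -eval_pair; apply: e => u hu.
  by rewrite eval_pair hu eval_const1.
case: e => e1 _; apply: hx; by rewrite -hw0.
Qed.
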